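(* Let $A$ be a bilaterally pseudocompact dg $R$-algebra. \begin{itemize} \item[a)] The homology $H^*(A)$ is a bilaterally pseudocompact graded $R$-algebra; in particular, $H^0(A)$ is a pseudocompact $R$-algebra. \item[b)] For each pseudocompact dg $A$-module $M$, the homology $H^*(M)$ is a pseudocompact graded module over $H^*(A)$. \end{itemize}
   Context: $k$ is a field and $R$ a finite-dimensional separable $k$-algebra. A dg $R$-algebra is a differential algebra in the category of graded $R$-bimodules. It is bilaterally pseudocompact if it carries a complete separated topology admitting a basis of neighbourhoods of $0$ formed by two-sided dg ideals of finite total codimension. A bilaterally pseudocompact graded $R$-algebra is defined analogously with graded two-sided ideals of finite codimension. A pseudocompact $R$-algebra is an $R$-algebra with a complete separated linear topology having a basis of neighbourhoods of $0$ formed by one-sided ideals of finite codimension. A right dg $A$-module is pseudocompact if it carries a topology for which it is complete and separated (as a graded $A$-module) with a basis of neighbourhoods of $0$ formed by dg submodules of finite total codimension; a pseudocompact graded module over a graded algebra is defined analogously with graded submodules of finite codimension. *)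

(* Defs.v *)
From HB Require Import structures.
From mathcomp Require Import all_boot all_order all_algebra all_field.
Set Implicit Arguments. Unset Strict Implicit. Unset Printing Implicit Defensive.
Import GRing.Theory.
Local Open Scope ring_scope.

(* Separable finite-dimensional k-algebras: existence of a separability *)
(* idempotent e = sum_{j,l} c_{jl} e_j (x) e_l in R (x)_k R^op, written  *)
(* in coordinates w.r.t. the basis (e_j) = vbasis {:R}:                  *)
(*   mu(e) = 1  and  r e = e r for all r.                                *)
Definition separable_alg (k : fieldType) (R : falgType k) : Prop :=
  exists c : 'M[k]_(\dim (fullv : {vspace R})),
    \sum_(j < \dim (fullv : {vspace R})) \sum_(l < \dim (fullv : {vspace R}))
        c j l *: ((vbasis (fullv : {vspace R}))`_j * (vbasis (fullv : {vspace R}))`_l) = 1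
    /\ forall (r : R) (p q : 'I_(\dim (fullv : {vspace R}))),
      \sum_(j < \dim (fullv : {vspace R}))
          c j q * coord (vbasis (fullv : {vspace R})) p (r * (vbasis (fullv : {vspace R}))`_j)
      = \sum_(l < \dim (fullv : {vspace R}))
          c p l * coord (vbasis (fullv : {vspace R})) q ((vbasis (fullv : {vspace R}))`_l * r).

Section Space.
Variables (k : fieldType) (V : lmodType k).

Definition subspace (S : V -> Prop) : Prop :=
  S 0 /\ forall (a : k) (u v : V), S u -> S v -> S (a *: u + v).

Definition subset_of (S S' : V -> Prop) : Prop := forall v, S v -> S' v.

Definition fincodim (S S' : V -> Prop) : Prop :=
  exists s : seq V, (forall v, v \in s -> S v) /\
    forall v, S v -> exists c : 'I_(size s) -> k,
      S' (v - \sum_(i < size s) c i *: s`_i).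

(* A Z-grading of V (V is the total space = direct sum of the components   *)
(* V^n = image of pi n), given by the family of projections pi n.          *)
Definition is_grading (pi : int -> V -> V) : Prop :=
  (forall n (a : k) u v, pi n (a *: u + v) = a *: pi n u + pi n v) /\
  (forall m n v, pi m (pi n v) = if m == n then pi n v else 0) /\
  (forall v, exists s : seq int, uniq s /\ (forall n, n \notin s -> pi n v = 0)
                                 /\ v = \sum_(n <- s) pi n v).

Definition graded_sub (pi : int -> V -> V) (S : V -> Prop) : Prop :=
  subspace S /\ forall n v, S v -> S (pi n v).

Definition directed (U : (V -> Prop) -> Prop) : Prop :=
  (exists J, U J) /\
  forall J1 J2, U J1 -> U J2 -> exists J3, U J3 /\ subset_of J3 J1 /\ subset_of J3 J2.

(* The subquotient Z/B (B <= Z) carries the linear topology whose basis of *)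
(* neighbourhoods of 0 is {J/B | J in U}. [gr_pc_top] says: this is a      *)
(* basis (directed), formed by graded subspaces of finite total codimension*)
(* and the topology is separated and complete as a graded space (i.e. in   *)
(* each degree n).  Elements of Z/B are represented by elements of Z.      *)
Definition gr_pc_top (pi : int -> V -> V) (Z B : V -> Prop)
    (U : (V -> Prop) -> Prop) : Prop :=
  directed U /\
  (forall J, U J -> graded_sub pi J /\ subset_of B J /\ subset_of J Z /\ fincodim Z J) /\
  (forall v, Z v -> (forall J, U J -> J v) -> B v) /\
  (forall (n : int) (x : (V -> Prop) -> V),
     (forall J, U J -> Z (x J) /\ pi n (x J) = x J) ->
     (forall J1 J2, U J1 -> U J2 -> subset_of J1 J2 -> J2 (x J1 - x J2)) ->
     exists x0, Z x0 /\ pi n x0 = x0 /\ forall J, U J -> J (x0 - x J)).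

Definition pc_top (Z B : V -> Prop) (U : (V -> Prop) -> Prop) : Prop :=
  directed U /\
  (forall J, U J -> subspace J /\ subset_of B J /\ subset_of J Z /\ fincodim Z J) /\
  (forall v, Z v -> (forall J, U J -> J v) -> B v) /\
  (forall x : (V -> Prop) -> V,
     (forall J, U J -> Z (x J)) ->
     (forall J1 J2, U J1 -> U J2 -> subset_of J1 J2 -> J2 (x J1 - x J2)) ->
     exists x0, Z x0 /\ forall J, U J -> J (x0 - x J)).

End Space.

Section Alg.
Variables (k : fieldType) (T : algType k).

Definition graded_alg (pi : int -> T -> T) : Prop :=
  is_grading pi /\ pi 0 1 = 1 /\
  forall (p q : int) a b, pi p a = a -> pi q b = b -> pi (p + q) (a * b) = a * b.

Definition two_sided_ideal_in (Z J : T -> Prop) : Prop :=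
  forall a b, Z a -> J b -> J (a * b) /\ J (b * a).

Definition right_ideal_in (Z J : T -> Prop) : Prop :=
  forall a b, Z a -> J b -> J (b * a).

(* A dg R-algebra (monoid in dg R-bimodules) = graded k-algebra T with a    *)
(* k-algebra map phi : R -> T^0, and an R-bilinear differential d of       *)
(* degree 1 satisfying the graded Leibniz rule.                            *)
Definition dg_R_alg (R : falgType k) (pi : int -> T -> T) (d : T -> T)
    (phi : R -> T) : Prop :=
  graded_alg pi /\
  (forall (a : k) u v, phi (a *: u + v) = a *: phi u + phi v) /\
  phi 1 = 1 /\ (forall u v, phi (u * v) = phi u * phi v) /\
  (forall u, pi 0 (phi u) = phi u) /\
  (forall (a : k) u v, d (a *: u + v) = a *: d u + d v) /\
  (forall n v, pi (n + 1) (d (pi n v)) = d (pi n v)) /\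
  (forall v, d (d v) = 0) /\
  (forall (p : int) a b, pi p a = a ->
      d (a * b) = d a * b + (-1) ^+ `|p|%N * (a * d b)) /\
  (forall r a, d (phi r * a) = phi r * d a /\ d (a * phi r) = d a * phi r).

Definition bpc_dg_alg (pi : int -> T -> T) (d : T -> T) (U : (T -> Prop) -> Prop) : Prop :=
  gr_pc_top pi (fun _ => True) (fun v => v = 0) U /\
  (forall I, U I -> two_sided_ideal_in (fun _ => True) I /\ (forall v, I v -> I (d v))).

(* The graded algebra Z/B (Z a graded subalgebra, B a graded two-sided ideal *)
(* of Z) with topology of basis {J/B | J in U} is a bilaterally           *)
(* pseudocompact graded algebra.                                           *)
Definition bpc_graded_alg_q (pi : int -> T -> T) (Z B : T -> Prop)
    (U : (T -> Prop) -> Prop) : Prop :=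
  graded_alg pi /\ graded_sub pi Z /\ Z 1 /\ (forall a b, Z a -> Z b -> Z (a * b)) /\
  graded_sub pi B /\ subset_of B Z /\ two_sided_ideal_in Z B /\
  (forall J, U J -> two_sided_ideal_in Z J) /\
  gr_pc_top pi Z B U.

(* The (ungraded) algebra Z/B with topology of basis {J/B | J in U} is a   *)
(* pseudocompact algebra (basis of right ideals of finite codimension).    *)
Definition pc_alg_q (Z B : T -> Prop) (U : (T -> Prop) -> Prop) : Prop :=
  subspace Z /\ Z 1 /\ (forall a b, Z a -> Z b -> Z (a * b)) /\
  subspace B /\ subset_of B Z /\ two_sided_ideal_in Z B /\
  (forall J, U J -> right_ideal_in Z J) /\
  pc_top Z B U.

End Alg.

Section Homology.
Variables (k : fieldType) (V : lmodType k).

Definition cycles (d : V -> V) : V -> Prop := fun a => d a = 0.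
Definition bounds (d : V -> V) : V -> Prop := fun a => exists b, a = d b.
(* basis of the induced topology on H = Z/B: the images (I /\ Z + B)/B *)
Definition hom_top (d : V -> V) (U : (V -> Prop) -> Prop) : (V -> Prop) -> Prop :=
  fun J => exists I, U I /\ J = (fun z => exists i c, I i /\ d i = 0 /\ z = i + d c).

Definition cycles0 (pi : int -> V -> V) (d : V -> V) : V -> Prop :=
  fun a => pi 0 a = a /\ d a = 0.
Definition bounds0 (pi : int -> V -> V) (d : V -> V) : V -> Prop :=
  fun a => pi 0 a = a /\ exists b, a = d b.
Definition hom_top0 (pi : int -> V -> V) (d : V -> V) (U : (V -> Prop) -> Prop)
  : (V -> Prop) -> Prop :=
  fun J => exists I, U I /\
    J = (fun z => pi 0 z = z /\ exists i c, I i /\ d i = 0 /\ z = i + d c).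
End Homology.

Section Module.
Variables (k : fieldType) (T : algType k) (M : lmodType k).

Definition dg_module (pi : int -> T -> T) (d : T -> T) (piM : int -> M -> M)
    (dM : M -> M) (act : M -> T -> M) : Prop :=
  is_grading piM /\
  (forall (a : k) m m' x, act (a *: m + m') x = a *: act m x + act m' x) /\
  (forall (a : k) m x y, act m (a *: x + y) = a *: act m x + act m y) /\
  (forall m, act m 1 = m) /\
  (forall m x y, act (act m x) y = act m (x * y)) /\
  (forall (p q : int) m x, piM p m = m -> pi q x = x -> piM (p + q) (act m x) = act m x) /\
  (forall (a : k) u v, dM (a *: u + v) = a *: dM u + dM v) /\
  (forall n v, piM (n + 1) (dM (piM n v)) = dM (piM n v)) /\
  (forall v, dM (dM v) = 0) /\
  (forall (p : int) m x, piM p m = m ->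
      dM (act m x) = act (dM m) x + (-1) ^+ `|p|%N *: act m (d x)).

Definition pc_dg_module (piM : int -> M -> M) (dM : M -> M) (act : M -> T -> M)
    (N : (M -> Prop) -> Prop) : Prop :=
  gr_pc_top piM (fun _ => True) (fun v => v = 0) N /\
  (forall J, N J -> (forall m x, J m -> J (act m x)) /\ (forall m, J m -> J (dM m))).

(* ZM/BM, with topology of basis {J/BM | J in NH}, is a pseudocompact      *)
(* graded module over the graded algebra ZA/BA (action induced by act).    *)
Definition pc_gr_module_q (piM : int -> M -> M) (act : M -> T -> M)
    (ZA BA : T -> Prop) (ZM BM : M -> Prop) (NH : (M -> Prop) -> Prop) : Prop :=
  graded_sub piM ZM /\ graded_sub piM BM /\ subset_of BM ZM /\
  (forall m x, ZM m -> ZA x -> ZM (act m x)) /\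
  (forall m x, BM m -> ZA x -> BM (act m x)) /\
  (forall m x, ZM m -> BA x -> BM (act m x)) /\
  (forall J, NH J -> forall m x, J m -> ZA x -> J (act m x)) /\
  gr_pc_top piM ZM BM NH.
End Module.

(* Main.v *)
Require Import Defs.
From HB Require Import structures.
From mathcomp Require Import all_boot all_order all_algebra all_field.
From mathcomp Require Import boolp classical_sets.
Set Implicit Arguments. Unset Strict Implicit. Unset Printing Implicit Defensive.
Import GRing.Theory.
Local Open Scope ring_scope.

Section Lin.
Variables (k : fieldType) (V W : lmodType k) (f : V -> W).
Definition islin := forall (a : k) u v, f (a *: u + v) = a *: f u + f v.
Hypothesis hf : islin.
Lemma lin0 : f 0 = 0.
Proof.
have := hf 1 0 0; rewrite !scale1r addr0 -{1}(addr0 (f 0)).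
by move/addrI.
Qed.
Lemma linD u v : f (u + v) = f u + f v.
Proof. by have := hf 1 u v; rewrite !scale1r. Qed.
Lemma linZ a u : f (a *: u) = a *: f u.
Proof. by have := hf a u 0; rewrite lin0 !addr0. Qed.
Lemma linN u : f (- u) = - f u.
Proof. by rewrite -scaleN1r linZ scaleN1r. Qed.
Lemma linB u v : f (u - v) = f u - f v.
Proof. by rewrite linD linN. Qed.
Lemma lin_sum I (r : seq I) (P : pred I) (F : I -> V) :
  f (\sum_(i <- r | P i) F i) = \sum_(i <- r | P i) f (F i).
Proof. exact: (big_morph f linD lin0). Qed.
End Lin.

Section Sub.
Variables (k : fieldType) (V : lmodType k) (S : V -> Prop).
Hypothesis hS : subspace S.
Lemma sub0 : S 0. Proof. by case: hS. Qed.
Lemma subD u v : S u -> S v -> S (u + v).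
Proof. by move=> ? ?; rewrite -(scale1r u); apply hS. Qed.
Lemma subZ a u : S u -> S (a *: u).
Proof. by move=> ?; rewrite -(addr0 (a *: u)); apply hS => //; apply sub0. Qed.
Lemma subN u : S u -> S (- u).
Proof. by move=> ?; rewrite -scaleN1r; apply subZ. Qed.
Lemma subB u v : S u -> S v -> S (u - v).
Proof. by move=> ? ?; apply subD => //; apply subN. Qed.
Lemma sub_sum I (r : seq I) (P : pred I) (F : I -> V) :
  (forall i, P i -> S (F i)) -> S (\sum_(i <- r | P i) F i).
Proof.
move=> h; apply: (big_ind S) => //; [exact: sub0| exact: subD].
Qed.
End Sub.

Lemma fincodim_mono (k : fieldType) (V : lmodType k) (Z J1 J2 : V -> Prop) :
  fincodim Z J1 -> subset_of J1 J2 -> fincodim Z J2.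
Proof.
move=> [s [hs1 hs2]] h; exists s; split => // v Zv.
by have [c hc] := hs2 v Zv; exists c; apply h.
Qed.

Lemma fincodim_of_fun (k : fieldType) (V : lmodType k) (Z J : V -> Prop) n
    (f : 'I_n -> V) :
  (forall i, Z (f i)) ->
  (forall v, Z v -> exists c : 'I_n -> k, J (v - \sum_(i < n) c i *: f i)) ->
  fincodim Z J.
Proof.
move=> hZ hJ.
pose s := [seq f i | i <- enum 'I_n].
have E : size s = n by rewrite size_map size_enum_ord.
have hs : forall i : 'I_(size s), s`_i = f (cast_ord E i).
  move=> i; rewrite (nth_map (cast_ord E i)); last by rewrite size_enum_ord -E.
  congr f; apply/val_inj => /=.
  by rewrite nth_enum_ord // -E.
move: s E hs => s E hs.
subst n.
exists s; split.
  move=> v /(nthP 0) [i hi <-].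
  by have := hs (Ordinal hi); rewrite cast_ord_id /= => ->.
move=> v /hJ [c hc]; exists c.
suff -> : \sum_(i < size s) c i *: s`_i = \sum_(i < size s) c i *: f i by [].
by apply: eq_bigr => i _; rewrite hs cast_ord_id.
Qed.

Section Mat.
Variables (k : fieldType) (V : lmodType k).

Definition qmap (s : seq V) (c : 'rV[k]_(size s)) : V :=
  \sum_(i < size s) c 0 i *: s`_i.

Lemma qmap_lin (s : seq V) : islin (@qmap s).
Proof.
move=> a u v; rewrite /qmap scaler_sumr -big_split /=.
by apply: eq_bigr => i _; rewrite !mxE scalerDl scalerA.
Qed.

Lemma rows_sum (m n : nat) (P : 'rV[k]_m -> Prop) (X : 'M[k]_(n, m)) c :
  subspace P -> (forall i, P (row i X)) -> (c <= X)%MS -> P c.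
Proof.
move=> hP hX /submxP [w ->]; rewrite mulmx_sum_row.
by apply: sub_sum => // i _; apply: subZ.
Qed.

Lemma max_rank m (P : 'rV[k]_m -> Prop) : subspace P ->
  exists n (X : 'M[k]_(n, m)), (forall i, P (row i X)) /\
     forall c, P c -> (c <= X)%MS.
Proof.
move=> hP; apply/not_existsP => H.
suff : forall j, exists n (X : 'M[k]_(n, m)), (forall i, P (row i X)) /\
                   (j <= \rank X)%N.
  move=> /(_ m.+1) [n [X [_]]]; by rewrite leqNgt ltnS rank_leq_col.
elim => [|j [n [X [hX hj]]]].
  by exists 0%N, 0; split => // i; case: i.
have : ~ (forall c, P c -> (c <= X)%MS).
  by move=> hc; apply: (H n) ; exists X; split.
move=> /existsNP [c]; move=> /not_implyP [Pc cX].
exists (n + 1)%N, (col_mx X c); split.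
  move=> i; rewrite -[i](splitK) ; case: (split i) => i' /=.
    by rewrite rowKu.
  by rewrite rowKd row_id.
apply: leq_ltn_trans hj _; apply: rank_ltmx.
rewrite ltmxE; apply/andP; split.
  by rewrite -addsmxE addsmxSl.
rewrite col_mx_sub; apply/negP => /andP [_ h]; apply: cX; exact/idP.
Qed.

Lemma span_fincodim (Z I : V -> Prop) : subspace Z -> subspace I ->
  fincodim (fun _ => True) I -> fincodim Z (fun v => Z v /\ I v).
Proof.
move=> hZ hI [s [_ hs]].
pose P (c : 'rV[k]_(size s)) := exists z, Z z /\ I (z - qmap c).
have hP : subspace P.
  split; first by exists 0; split; [exact: sub0|]; rewrite (lin0 (@qmap_lin s)) subr0; exact: sub0.
  move=> a u v [zu [Zu Iu]] [zv [Zv Iv]]; exists (a *: zu + zv); split.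
    by apply hZ.
  rewrite qmap_lin.
  have -> : a *: zu + zv - (a *: qmap u + qmap v) = a *: (zu - qmap u) + (zv - qmap v).
    by rewrite scalerBr opprD addrACA.
  by apply hI.
have [n [X [hX hXc]]] := max_rank hP.
have [zf hzf] := choice (fun i => hX i).
apply: (@fincodim_of_fun _ _ _ _ n zf); first by move=> i; case: (hzf i).
move=> v Zv.
have [c0 hc0] := hs v Logic.I.
pose c := \row_i c0 i.
have Pc : P c.
  exists v; split => //; congr I: hc0; congr (_ - _).
  by apply: eq_bigr => i _; rewrite mxE.
have /submxP [w hw] := hXc c Pc.
exists (fun i => w 0 i); split.
  apply: subB => //; apply: sub_sum => // i _; apply: subZ => //; by case: (hzf i).
have eqc : qmap c = \sum_i w 0 i *: qmap (row i X).
  by rewrite hw mulmx_sum_row (lin_sum (@qmap_lin s)); apply: eq_bigr => i _; rewrite (linZ (@qmap_lin s)).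
have -> : v - \sum_(i < n) w 0 i *: zf i =
     (v - qmap c) - \sum_(i < n) w 0 i *: (zf i - qmap (row i X)).
  rewrite eqc.
  have -> : \sum_(i < n) w 0 i *: (zf i - qmap (row i X)) = \sum_(i < n) w 0 i *: zf i - \sum_(i < n) w 0 i *: qmap (row i X).
    by rewrite -sumrB; apply: eq_bigr => i _; rewrite scalerBr.
  by rewrite opprB addrA subrK.
apply: subB => //.
  congr I: hc0; congr (_ - _); by apply: eq_bigr => i _; rewrite mxE.
by apply: sub_sum => // i _; apply: subZ => //; case: (hzf i).
Qed.
End Mat.

Lemma rank_col_lt (k : fieldType) n m (X : 'M[k]_(n, m)) (r : 'rV_m) :
  ~ (r <= X)%MS -> (\rank X < \rank (col_mx X r))%N.
Proof.
move=> cX; apply: rank_ltmx.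
rewrite ltmxE; apply/andP; split.
  by rewrite -addsmxE addsmxSl.
rewrite col_mx_sub; apply/negP => /andP [_ h]; apply: cX; exact/idP.
Qed.

Lemma rows_col (k : fieldType) n m (P : 'rV[k]_m -> Prop) (X : 'M[k]_(n, m)) r :
  (forall i, P (row i X)) -> P r -> forall i, P (row i (col_mx X r)).
Proof.
move=> hX hr i; rewrite -[i](splitK) ; case: (split i) => i' /=.
  by rewrite rowKu.
by rewrite rowKd row_id.
Qed.

Section FD.
Variables (k : fieldType) (V : lmodType k).

Lemma fd (W I' : V -> Prop) (s : seq V) (C : (V -> Prop) -> Prop) :
  subspace I' ->
  (forall v, W v -> exists c : 'I_(size s) -> k, I' (v - \sum_(i < size s) c i *: s`_i)) ->
  (exists S, C S) ->
  (forall S1 S2, C S1 -> C S2 -> exists S3, C S3 /\ subset_of S3 S1 /\ subset_of S3 S2) ->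
  (forall S, C S -> (exists x, S x) /\ subset_of S W /\
      (forall x y z (a : k), S x -> S y -> S z -> S (x + a *: (y - z))) /\
      (forall x i, S x -> I' i -> S (x + i))) ->
  exists x, forall S, C S -> S x.
Proof.
move=> hI hs [S0 CS0] hdir hC.
pose m := size s.
pose q := @qmap k V s.
have ql := @qmap_lin k V s.
have cover : forall y, W y -> exists c, I' (y - q c).
  move=> y /hs [c0 hc0]; exists (\row_i c0 i); congr I': hc0; congr (_ - _).
  by apply: eq_bigr => i _; rewrite mxE.
have qin : forall S y, C S -> S y -> exists c, S (q c) /\ I' (y - q c).
  move=> S y CS Sy; have [_ [SW [_ Ssat]]] := hC S CS.
  have [c hc] := cover y (SW y Sy); exists c; split => //.
  have -> : q c = y + - (y - q c) by rewrite opprB addrC subrK.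
  by apply: Ssat => //; apply: subN.
pose D S (c : 'rV[k]_m) := exists c1 c2, S (q c1) /\ S (q c2) /\ c = c1 - c2.
have Dsub : forall S, C S -> subspace (D S).
  move=> S CS; have [[y Sy] [SW [Saff Ssat]]] := hC S CS.
  have [c [Sc _]] := qin S y CS Sy.
  split; first by exists c, c; rewrite subrr.
  move=> a u v [c1 [c2 [S1 [S2 ->]]]] [c3 [c4 [S3 [S4 ->]]]].
  exists (c3 + a *: (c1 - c2)), c4; split; last split => //.
    by rewrite /q (linD ql) (linZ ql) (linB ql); apply: Saff.
  by rewrite addrA (addrC _ c3).
pose bound S N := forall n (X : 'M[k]_(n, m)), (forall i, D S (row i X)) -> (\rank X <= N)%N.
have main : forall N S, C S -> bound S N -> exists x, forall S, C S -> S x.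
  elim => [|N IH] S CS bS.
  - have [all|] := pselect (forall S', C S' -> subset_of S S').
      have [[y Sy] _] := hC S CS; exists y => S' CS'; exact: all.
    move=> /existsNP [S' /not_implyP [CS' /existsNP [y /not_implyP [Sy nS'y]]]].
    exfalso.
    have [S3 [CS3 [S3S S3S']]] := hdir S S' CS CS'.
    have [[p3 Sp3] [SW3 [Saff3 Ssat3]]] := hC S3 CS3.
    have [[_ _] [SW [Saff Ssat]]] := hC S CS.
    have [cp [Scp _]] := qin S3 p3 CS3 Sp3.
    have [cy [Scy Icy]] := qin S y CS Sy.
    have nD : ~ D S3 (cy - cp).
      move=> [c1 [c2 [S1 [S2 e]]]]; apply: nS'y; apply: S3S'.
      have -> : y = q cy + (y - q cy) by rewrite addrC subrK.
      apply: Ssat3 => //.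
      have -> : cy = cp + 1 *: (c1 - c2) by rewrite scale1r -e addrC subrK.
      rewrite /q (linD ql) (linZ ql) (linB ql); exact: Saff3.
    have DS : D S (cy - cp) by exists cy, cp; split => //; split => //; exact: S3S.
    have h0 : forall i : 'I_0, D S (row i (0 : 'M[k]_(0, m))) by case.
    have nX : ~ (cy - cp <= (0 : 'M[k]_(0, m)))%MS.
      move=> h; apply: nD; apply: (rows_sum (Dsub S3 CS3) _ h); by case.
    have h1 := rank_col_lt nX.
    have h2 := bS _ _ (rows_col h0 DS).
    by move: (leq_trans h1 h2); rewrite ltn0.
  - have [all|] := pselect (forall S', C S' -> subset_of S S').
      have [[y Sy] _] := hC S CS; exists y => S' CS'; exact: all.
    move=> /existsNP [S' /not_implyP [CS' /existsNP [y /not_implyP [Sy nS'y]]]].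
    have [S3 [CS3 [S3S S3S']]] := hdir S S' CS CS'.
    have [[p3 Sp3] [SW3 [Saff3 Ssat3]]] := hC S3 CS3.
    have [[_ _] [SW [Saff Ssat]]] := hC S CS.
    have [cp [Scp _]] := qin S3 p3 CS3 Sp3.
    have [cy [Scy Icy]] := qin S y CS Sy.
    have nD : ~ D S3 (cy - cp).
      move=> [c1 [c2 [S1 [S2 e]]]]; apply: nS'y; apply: S3S'.
      have -> : y = q cy + (y - q cy) by rewrite addrC subrK.
      apply: Ssat3 => //.
      have -> : cy = cp + 1 *: (c1 - c2) by rewrite scale1r -e addrC subrK.
      rewrite /q (linD ql) (linZ ql) (linB ql); exact: Saff3.
    have DS : D S (cy - cp) by exists cy, cp; split => //; split => //; exact: S3S.
    apply: (IH S3 CS3) => n X hX.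
    have hX' : forall i, D S (row i X).
      move=> i; have [c1 [c2 [S1 [S2 e]]]] := hX i; exists c1, c2; split; [exact: S3S|split => //; exact: S3S].
    have := bS _ _ (rows_col hX' DS).
    have := rank_col_lt (X := X) (r := cy - cp).
    have nX : ~ (cy - cp <= X)%MS by move=> h; apply: nD; exact: (rows_sum (Dsub S3 CS3) hX h).
    move=> /(_ nX) h1 h2; rewrite -ltnS; exact: leq_trans h1 h2.
apply: (main m S0 CS0) => n X _; exact: rank_leq_col.
Qed.
End FD.

Lemma comb (k : fieldType) (V : lmodType k) (a : k) (x y z zx zy zz : V) :
  (zx + a *: (zy - zz)) - (x + a *: (y - z)) = (zx - x) + a *: ((zy - y) - (zz - z)).
Proof.
rewrite opprD addrACA -scalerBr; congr (_ + _ *: _).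
by rewrite !opprB addrACA [RHS]addrACA (addrC (- zz)).
Qed.

Lemma combI (k : fieldType) (V : lmodType k) (I : V -> Prop) (a : k) (x y z zx zy zz : V) :
  subspace I -> I (zx - x) -> I (zy - y) -> I (zz - z) ->
  I ((zx + a *: (zy - zz)) - (x + a *: (y - z))).
Proof. by move=> hI h1 h2 h3; rewrite comb; apply: subD => //; apply: subZ => //; apply: subB. Qed.

Lemma combP (k : fieldType) (V : lmodType k) (I : V -> Prop) (a : k) (p zx zy zz : V) :
  subspace I -> I (zx - p) -> I (zy - p) -> I (zz - p) ->
  I ((zx + a *: (zy - zz)) - p).
Proof.
move=> hI h1 h2 h3; have := combI a hI h1 h2 h3.
by rewrite subrr scaler0 addr0.
Qed.

Lemma satI (k : fieldType) (V : lmodType k) (I : V -> Prop) (z y i : V) :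
  subspace I -> I (z - y) -> I i -> I (z - (y + i)).
Proof. by move=> hI h1 h2; rewrite opprD addrA; apply: subB. Qed.

Lemma sref (k : fieldType) (V : lmodType k) (S : V -> Prop) : subset_of S S.
Proof. by []. Qed.
#[global] Hint Resolve sref : core.

Section ML.
Variables (k : fieldType) (V : lmodType k).
Variables (W : V -> Prop) (U : (V -> Prop) -> Prop).
Hypotheses (hW : subspace W) (hU : directed U) (hUs : forall I, U I -> subspace I)
  (hUf : forall I, U I -> fincodim W (fun v => W v /\ I v)).

Definition aff (S : V -> Prop) :=
  forall x y z (a : k), S x -> S y -> S z -> S (x + a *: (y - z)).
Definition sat (I S : V -> Prop) := forall x i, S x -> W i /\ I i -> S (x + i).

Lemma fdU I (C : (V -> Prop) -> Prop) : U I -> (exists S, C S) ->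
  (forall S1 S2, C S1 -> C S2 -> exists S3, C S3 /\ subset_of S3 S1 /\ subset_of S3 S2) ->
  (forall S, C S -> (exists x, S x) /\ subset_of S W /\ aff S /\ sat I S) ->
  exists x, forall S, C S -> S x.
Proof.
move=> UI hC hdir hS.
have [s [_ hs]] := hUf UI.
have hI' : subspace (fun v => W v /\ I v).
  have [h0 hl] := hUs UI; have [w0 wl] := hW.
  split => // a u v [? ?] [? ?]; split; [exact: wl|exact: hl].
apply: (@fd k V W _ s C hI' hs hC hdir) => S CS.
by have [? [? [? ?]]] := hS S CS; split => //; split => //; split.
Qed.

Definition mono (F : (V -> Prop) -> V -> Prop) :=
  forall I1 I2, U I1 -> U I2 -> subset_of I1 I2 -> subset_of (F I1) (F I2).

Definition goodf (A F : (V -> Prop) -> V -> Prop) :=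
  (forall I, U I -> subset_of (F I) (A I) /\ (exists x, F I x) /\ aff (F I) /\ sat I (F I))
  /\ mono F.

Lemma dirU I1 I2 : U I1 -> U I2 -> exists I3, U I3 /\ subset_of I3 I1 /\ subset_of I3 I2.
Proof. by case: hU => _; apply. Qed.

Lemma ml (A : (V -> Prop) -> V -> Prop) :
  (forall I, U I -> (exists x, A I x) /\ subset_of (A I) W /\ aff (A I) /\ sat I (A I)) ->
  mono A ->
  exists x : (V -> Prop) -> V, (forall I, U I -> A I (x I)) /\
     (forall I1 I2, U I1 -> U I2 -> subset_of I1 I2 -> I2 (x I1 - x I2)).
Proof.
move=> hA monoA.
have AW : forall I, U I -> subset_of (A I) W by move=> I UI; case: (hA I UI) => _ [].
have gA : goodf A A.
  split => // I UI; have [? [? [? ?]]] := hA I UI; by split.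
pose T := {F : (V -> Prop) -> V -> Prop | goodf A F}.
pose R (F G : T) := `[< forall I, U I -> subset_of (sval G I) (sval F I) >].
have [Fm Fmax] : exists t, premaximal (fun x y => R x y) t.
  apply: (@ZL_preorder T (exist _ A gA) R).
  - by move=> F; apply/asboolP => I _ x.
  - move=> F G H /asboolP h1 /asboolP h2; apply/asboolP => I UI x hx.
    by apply: h1 => //; apply: h2.
  - move=> Ch tot.
    pose L I x := A I x /\ forall F : T, Ch F -> sval F I x.
    have gL : goodf A L.
      split; last first.
        move=> I1 I2 U1 U2 s12 x [h1 h2]; split; first exact: monoA h1.
        move=> F ChF; case: (svalP F) => _ mF; exact: mF _ _ U1 U2 s12 x (h2 F ChF).
      move=> I UI; split; first by move=> x [].
      split; last split.
      + pose C S := S = A I \/ exists F : T, Ch F /\ S = sval F I.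
        have [x hx] : exists x, forall S, C S -> S x.
          apply: (@fdU I C UI); first by exists (A I); left.
          * move=> S1 S2 [->|[F1 [Ch1 ->]]] [->|[F2 [Ch2 ->]]].
            - by exists (A I); split; [left|split; exact: sref].
            - exists (sval F2 I); split; [by right; exists F2|split; last exact: sref].
              by case: (svalP F2) => /(_ I UI) [].
            - exists (sval F1 I); split; [by right; exists F1|split; first exact: sref].
              by case: (svalP F1) => /(_ I UI) [].
            - have [/asboolP h|/asboolP h] := tot F1 F2 Ch1 Ch2.
                by exists (sval F2 I); split; [right; exists F2|split; [apply: h|exact: sref]].
              by exists (sval F1 I); split; [right; exists F1|split; [exact: sref|apply: h]].
          * move=> S [->|[F [ChF ->]]]; first by have [? [? [? ?]]] := hA I UI.
            case: (svalP F) => /(_ I UI) [sFA [ne [af st]]] _.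
            split => //; split => //; move=> x hx; apply: (AW I UI); exact: sFA.
        exists x; split; first by apply: hx; left.
        by move=> F ChF; apply: hx; right; exists F.
      + move=> x y z a [h1 h2] [h3 h4] [h5 h6]; split.
          by have [_ [_ [af _]]] := hA I UI; apply: af.
        move=> F ChF; case: (svalP F) => /(_ I UI) [_ [_ [af _]]] _; exact: (af _ _ _ _ (h2 F ChF) (h4 F ChF) (h6 F ChF)).
      + move=> x i [h1 h2] hi; split.
          by have [_ [_ [_ st]]] := hA I UI; apply: st.
        move=> F ChF; case: (svalP F) => /(_ I UI) [_ [_ [_ st]]] _; exact: (st _ _ (h2 F ChF) hi).
    exists (exist _ L gL) => F ChF; apply/asboolP => I UI x [_ h]; exact: h.
case: Fm Fmax => F gF Fmax.
have [gF1 monoF] := gF.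
have surj : forall I I'', U I -> U I'' -> subset_of I'' I ->
    forall y, F I y -> exists z, F I'' z /\ I (z - y).
  pose H I y := F I y /\ (U I -> forall I'', U I'' -> subset_of I'' I ->
                  exists z, F I'' z /\ I (z - y)).
  have gH : goodf A H.
    split; last first.
      move=> I1 I2 U1 U2 s12 y [Fy hy]; split; first by apply: (monoF _ _ _ _ _ _ Fy).
      move=> _ I'' U'' s''; have [I3 [U3 [s31 s32]]] := dirU U'' U1.
      have [z [Fz Iz]] := hy U1 I3 U3 s32; exists z; split.
        by apply: (monoF _ _ _ _ _ _ Fz).
      exact: s12.
    move=> I UI; have [sFA [[p Fp] [afF stF]]] := gF1 I UI; split.
      by move=> x [/sFA].
    have hI := hUs UI.
    split; last split.
    + pose E I'' y := F I y /\ exists z, F I'' z /\ I (z - y).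
      pose C S := exists I'', U I'' /\ subset_of I'' I /\ S = E I''.
      have [x hx] : exists x, forall S, C S -> S x.
        apply: (@fdU I C UI); first by exists (E I), I; split => //; split.
        * move=> S1 S2 [I1 [U1 [s1 ->]]] [I2 [U2 [s2 ->]]].
          have [I3 [U3 [s31 s32]]] := dirU U1 U2.
          exists (E I3); split; first by exists I3; split => //; split => // x /s31 /s1.
          split => y [Fy [z [Fz Iz]]]; split => //; exists z; split => //; by apply: (monoF _ _ _ _ _ _ Fz).
        * move=> S [I'' [U'' [s'' ->]]]; split.
            have [_ [[z Fz] _]] := gF1 I'' U''.
            exists z; split; first by apply: (monoF _ _ _ _ _ _ Fz).
            by exists z; split => //; rewrite subrr; apply: sub0.
          split; first by move=> y [/sFA /(AW I UI _)].
          split.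
          - move=> x y z a [Fx [zx [Fzx Ix]]] [Fy [zy [Fzy Iy]]] [Fz [zz [Fzz Iz]]].
            split; first exact: afF.
            exists (zx + a *: (zy - zz)); split; last exact: combI.
            by have [_ [_ [af _]]] := gF1 I'' U''; apply: af.
          - move=> y i [Fy [z [Fz Iz]]] [Wi Ii]; split; first exact: stF.
            by exists z; split => //; apply: satI.
      exists x; split; first by have [] := hx (E I) (ex_intro _ I (conj UI (conj (fun x h => h) erefl))).
      move=> _ I'' U'' s''.
      by have [_ ] := hx (E I'') (ex_intro _ I'' (conj U'' (conj s'' erefl))).
    + move=> x y z a [Fx hx] [Fy hy] [Fz hz]; split; first exact: afF.
      move=> _ I'' U'' s''.
      have [zx [Fzx Ix]] := hx UI I'' U'' s''.
      have [zy [Fzy Iy]] := hy UI I'' U'' s''.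
      have [zz [Fzz Iz]] := hz UI I'' U'' s''.
      exists (zx + a *: (zy - zz)); split; last exact: combI.
      by have [_ [_ [af _]]] := gF1 I'' U''; apply: af.
    + move=> y i [Fy hy] [Wi Ii]; split; first exact: stF.
      move=> _ I'' U'' s''; have [z [Fz Iz]] := hy UI I'' U'' s''.
      by exists z; split => //; apply: satI.
  have := Fmax (exist _ H gH).
  have RFH : R (exist _ F gF) (exist _ H gH) by apply/asboolP => I _ x [].
  move=> /(_ RFH) /asboolP hFH I I'' UI U'' s'' y Fy.
  by have [_ ] := hFH I UI y Fy; apply.
have uniq : forall I0, U I0 -> forall p y, F I0 p -> F I0 y -> I0 (y - p).
  move=> I0 U0 p y Fp Fy.
  pose G I y := F I y /\ (U I -> forall I'', U I'' -> subset_of I'' I -> subset_of I'' I0 ->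
                  exists z, F I'' z /\ I0 (z - p) /\ I (z - y)).
  have hI0 := hUs U0.
  have gG : goodf A G.
    split; last first.
      move=> I1 I2 U1 U2 s12 y' [Fy' hy]; split; first by apply: (monoF _ _ _ _ _ _ Fy').
      move=> _ I'' U'' s'' s''0; have [I3 [U3 [s31 s32]]] := dirU U'' U1.
      have [z [Fz [I0z Iz]]] := hy U1 I3 U3 s32 (fun x h => s''0 x (s31 x h)).
      exists z; split; first by apply: (monoF _ _ _ _ _ _ Fz).
      by split => //; apply: s12.
    move=> I UI; have [sFA [_ [afF stF]]] := gF1 I UI; split.
      by move=> x [/sFA].
    have hI := hUs UI.
    split; last split.
    + pose E I'' y := F I y /\ exists z, F I'' z /\ I0 (z - p) /\ I (z - y).
      pose C S := exists I'', U I'' /\ subset_of I'' I /\ subset_of I'' I0 /\ S = E I''.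
      have [x hx] : exists x, forall S, C S -> S x.
        apply: (@fdU I C UI).
        * have [I3 [U3 [s31 s32]]] := dirU UI U0; by exists (E I3), I3.
        * move=> S1 S2 [I1 [U1 [s1 [s10 ->]]]] [I2 [U2 [s2 [s20 ->]]]].
          have [I3 [U3 [s31 s32]]] := dirU U1 U2.
          exists (E I3); split.
            by exists I3; split => //; split; [move=> x /s31 /s1|split => // x /s31 /s10].
          split => y' [Fy' [z [Fz [I0z Iz]]]]; split => //; exists z; split => //; by apply: (monoF _ _ _ _ _ _ Fz).
        * move=> S [I'' [U'' [s'' [s''0 ->]]]]; split.
            have [z [Fz I0z]] := surj I0 I'' U0 U'' s''0 p Fp.
            exists z; split; first by apply: (monoF _ _ _ _ _ _ Fz).
            by exists z; split => //; split => //; rewrite subrr; apply: sub0.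
          split; first by move=> y' [/sFA /(AW I UI _)].
          split.
          - move=> x y' z a [Fx [zx [Fzx [I0x Ix]]]] [Fy' [zy [Fzy [I0y Iy]]]] [Fz [zz [Fzz [I0zz Iz]]]].
            split; first exact: afF.
            exists (zx + a *: (zy - zz)); split; last split; last exact: combI.
              by have [_ [_ [af _]]] := gF1 I'' U''; apply: af.
            exact: combP.
          - move=> y' i [Fy' [z [Fz [I0z Iz]]]] [Wi Ii]; split; first exact: stF.
            by exists z; split => //; split => //; apply: satI.
      exists x; split.
        have [I3 [U3 [s31 s32]]] := dirU UI U0.
        by have [] := hx (E I3) (ex_intro _ I3 (conj U3 (conj s31 (conj s32 erefl)))).
      move=> _ I'' U'' s'' s''0.
      by have [_ ] := hx (E I'') (ex_intro _ I'' (conj U'' (conj s'' (conj s''0 erefl)))).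
    + move=> x y' z a [Fx hx] [Fy' hy] [Fz hz]; split; first exact: afF.
      move=> _ I'' U'' s'' s''0.
      have [zx [Fzx [I0x Ix]]] := hx UI I'' U'' s'' s''0.
      have [zy [Fzy [I0y Iy]]] := hy UI I'' U'' s'' s''0.
      have [zz [Fzz [I0zz Iz]]] := hz UI I'' U'' s'' s''0.
      exists (zx + a *: (zy - zz)); split; last split; last exact: combI.
        by have [_ [_ [af _]]] := gF1 I'' U''; apply: af.
      exact: combP.
    + move=> y' i [Fy' hy] [Wi Ii]; split; first exact: stF.
      move=> _ I'' U'' s'' s''0; have [z [Fz [I0z Iz]]] := hy UI I'' U'' s'' s''0.
      by exists z; split => //; split => //; apply: satI.
  have := Fmax (exist _ G gG).
  have RFG : R (exist _ F gF) (exist _ G gG) by apply/asboolP => I _ x [].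
  move=> /(_ RFG) /asboolP hFG.
  have [_ /(_ U0 I0 U0 (fun x h => h) (fun x h => h))] := hFG I0 U0 y Fy.
  move=> [z [_ [I0z I0y]]].
  have e : (z - p) - (z - y) = y - p by rewrite opprB addrC addrA subrK.
  rewrite -e.
  exact: subB.
have hex : forall I, exists x, U I -> F I x.
  move=> I; case: (pselect (U I)) => [UI|nUI]; last by exists 0.
  by have [_ [[x Fx] _]] := gF1 I UI; exists x.
have [xf hxf] := choice hex.
exists xf; split.
  by move=> I UI; have [sFA _] := gF1 I UI; apply: sFA; apply: hxf.
move=> I1 I2 U1 U2 s12.
exact: (uniq I2 U2 _ _ (hxf I2 U2) (monoF _ _ U1 U2 s12 _ (hxf I1 U1))).
Qed.
End ML.

Lemma sub_aff (k : fieldType) (V : lmodType k) (S : V -> Prop) : subspace S ->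
  forall x y z (a : k), S x -> S y -> S z -> S (x + a *: (y - z)).
Proof. move=> hS x y z a hx hy hz; apply: subD => //; apply: subZ => //; exact: subB. Qed.

Lemma subI (k : fieldType) (V : lmodType k) (S1 S2 : V -> Prop) :
  subspace S1 -> subspace S2 -> subspace (fun v => S1 v /\ S2 v).
Proof.
move=> [a0 al] [b0 bl]; split => // a u v [? ?] [? ?]; split; [exact: al|exact: bl].
Qed.

Section Grad.
Variables (k : fieldType) (V : lmodType k) (pi : int -> V -> V).
Hypothesis hg : is_grading pi.

Lemma pil n : islin (pi n). Proof. by case: hg => h _ ; exact: h. Qed.
Lemma pipi m n v : pi m (pi n v) = if m == n then pi n v else 0.
Proof. by case: hg => _ [h _]. Qed.
Lemma pipi_id n v : pi n (pi n v) = pi n v.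
Proof. by rewrite pipi eqxx. Qed.
Lemma decomp v : exists s : seq int, v = \sum_(n <- s) pi n v.
Proof. by case: hg => _ [_ /(_ v) [s [_ [_ e]]]]; exists s. Qed.
Lemma grad_closed (S : V -> Prop) v : subspace S -> (forall n, S (pi n v)) -> S v.
Proof.
move=> hS h; have [s ->] := decomp v; exact: sub_sum.
Qed.
Lemma homog_sub n : subspace (fun x => pi n x = x).
Proof.
split; first exact: (lin0 (pil n)).
by move=> a u v hu hv; rewrite (pil n) hu hv.
Qed.
End Grad.

Section Hom.
Variables (k : fieldType) (V : lmodType k) (pi : int -> V -> V) (d : V -> V)
  (U : (V -> Prop) -> Prop).
Hypotheses (hg : is_grading pi) (hd : islin d)
  (hdpi : forall n v, pi (n + 1) (d (pi n v)) = d (pi n v))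
  (hdd : forall v, d (d v) = 0)
  (htop : gr_pc_top pi (fun _ => True) (fun v => v = 0) U)
  (hdI : forall I, U I -> forall v, I v -> I (d v)).

Lemma comm n v : pi (n + 1) (d v) = d (pi n v).
Proof.
have [s ev] := decomp hg v.
have e1 : d v = \sum_(m <- s) d (pi m v) by rewrite {1}ev (lin_sum hd).
have e2 : pi n v = \sum_(m <- s) pi n (pi m v) by rewrite {1}ev (lin_sum (pil hg n)).
rewrite e1 e2 (lin_sum (pil hg _)) (lin_sum hd); apply: eq_bigr => m _.
rewrite -hdpi pipi // pipi //.
case: (eqVneq n m) => [->|nm]; first by rewrite eqxx.
by rewrite (inj_eq (addIr 1)) (negbTE nm) (lin0 hd).
Qed.

Lemma comm' n v : pi n (d v) = d (pi (n - 1) v).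
Proof. by rewrite -comm subrK. Qed.

Lemma cyc_pi n v : d v = 0 -> d (pi n v) = 0.
Proof. by move=> h; rewrite -comm h (lin0 (pil hg _)). Qed.

Lemma cyc_sub : subspace (cycles d).
Proof. split; first exact: (lin0 hd). by move=> a u v hu hv; rewrite /cycles hd hu hv scaler0 addr0. Qed.

Lemma bnd_sub : subspace (bounds d).
Proof.
split; first by exists 0; rewrite (lin0 hd).
by move=> a u v [b1 ->] [b2 ->]; exists (a *: b1 + b2); rewrite hd.
Qed.

Lemma Usub I : U I -> graded_sub pi I.
Proof. by case: htop => _ [/(_ I) h _] UI; case: (h UI). Qed.
Lemma Ufin I : U I -> fincodim (fun _ => True) I.
Proof. by case: htop => _ [/(_ I) h _] UI; case: (h UI) => _ [_ [_ ]]. Qed.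
Lemma Usep v : (forall I, U I -> I v) -> v = 0.
Proof. by case: htop => _ [_ [h _]]; apply: h. Qed.
Lemma Udir : directed U. Proof. by case: htop. Qed.
Lemma Ucompl n (x : (V -> Prop) -> V) :
  (forall J, U J -> pi n (x J) = x J) ->
  (forall J1 J2, U J1 -> U J2 -> subset_of J1 J2 -> J2 (x J1 - x J2)) ->
  exists x0, pi n x0 = x0 /\ forall J, U J -> J (x0 - x J).
Proof.
case: htop => _ [_ [_ h]] h1 h2.
have [x0 [_ [e hx]]] := h n x (fun J UJ => conj Logic.I (h1 J UJ)) h2.
by exists x0.
Qed.
Lemma Ussub I : U I -> subspace I. Proof. by move/Usub; case. Qed.

Definition Jf (I : V -> Prop) : V -> Prop :=
  fun z => exists i c, I i /\ d i = 0 /\ z = i + d c.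

Lemma Jsub I : U I -> subspace (Jf I).
Proof.
move=> UI; have hI := Ussub UI; split.
  by exists 0, 0; rewrite (lin0 hd) addr0; split => //; exact: sub0.
move=> a u v [i1 [c1 [I1 [d1 ->]]]] [i2 [c2 [I2 [d2 ->]]]].
exists (a *: i1 + i2), (a *: c1 + c2); split; first by case: hI => _; apply.
split; first by rewrite hd d1 d2 scaler0 addr0.
by rewrite hd scalerDr addrACA.
Qed.

Lemma Jgr I : U I -> graded_sub pi (Jf I).
Proof.
move=> UI; split; first exact: Jsub.
move=> n v [i [c [Ii [di ->]]]].
exists (pi n i), (pi (n - 1) c); split; first by case: (Usub UI) => _; apply.
split; first exact: cyc_pi.
by rewrite (linD (pil hg n)) comm'.
Qed.

Lemma JZ I : subset_of (Jf I) (cycles d).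
Proof. by move=> z [i [c [_ [di ->]]]]; rewrite /cycles (linD hd) di hdd addr0. Qed.
Lemma BJ I : U I -> subset_of (bounds d) (Jf I).
Proof.
move=> UI z [c ->]; exists 0, c; rewrite add0r (lin0 hd); split => //.
exact: (sub0 (Ussub UI)).
Qed.
Lemma ZIJ I z : I z -> d z = 0 -> Jf I z.
Proof. by move=> Iz dz; exists z, 0; rewrite (lin0 hd) addr0. Qed.
Lemma Jmono I1 I2 : subset_of I1 I2 -> subset_of (Jf I1) (Jf I2).
Proof. by move=> s z [i [c [Ii [di ->]]]]; exists i, c; split => //; apply: s. Qed.

Lemma dir_img (Jfun : (V -> Prop) -> V -> Prop) :
  (forall I1 I2, subset_of I1 I2 -> subset_of (Jfun I1) (Jfun I2)) ->
  directed (fun J => exists I, U I /\ J = Jfun I).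
Proof.
move=> hm; have [[I0 U0] hdir] := Udir; split; first by exists (Jfun I0), I0.
move=> _ _ [I1 [U1 ->]] [I2 [U2 ->]].
have [I3 [U3 [s1 s2]]] := hdir I1 I2 U1 U2.
by exists (Jfun I3); split; [exists I3|split; apply: hm].
Qed.

Lemma sep_h n v : pi n v = v -> d v = 0 -> (forall I, U I -> Jf I v) -> bounds d v.
Proof.
move=> hv dv hJ.
pose W := fun x => pi (n - 1) x = x.
have hW : subspace W := homog_sub hg (n - 1).
pose A (I : V -> Prop) c := W c /\ I (v - d c).
have [xf [hA hc]] : exists x : (V -> Prop) -> V, (forall I, U I -> A I (x I)) /\
     (forall I1 I2, U I1 -> U I2 -> subset_of I1 I2 -> I2 (x I1 - x I2)).
  apply: (@ml k V W U hW Udir Ussub).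
  - move=> I UI; exact: span_fincodim hW (Ussub UI) (Ufin UI).
  - move=> I UI; have hI := Ussub UI; split; last split; last split.
    + have [i [c' [Ii [di e]]]] := hJ I UI.
      exists (pi (n - 1) c'); split; first exact: pipi_id.
      rewrite -comm' -{1}hv -(linB (pil hg n)) e addrK.
      by case: (Usub UI) => _; apply.
    + by move=> x [].
    + move=> x y z a [Wx Ix] [Wy Iy] [Wz Iz]; split.
        by rewrite /W (linD (pil hg _)) (linZ (pil hg _)) (linB (pil hg _)) Wx Wy Wz.
      rewrite (linD hd) (linZ hd) (linB hd).
      rewrite -opprB; apply: subN => //; apply: combP => //; rewrite -opprB; exact: subN.
    + move=> x i [Wx Ix] [Wi Ii]; split; first by rewrite /W (linD (pil hg _)) Wx Wi.
      by rewrite (linD hd); apply: satI => //; apply: hdI.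
  - by move=> I1 I2 _ _ s x [Wx Ix]; split => //; apply: s.
have [x0 [px0 hx0]] := Ucompl (x := xf) (n := n - 1) (fun J UJ => proj1 (hA J UJ)) hc.
exists x0; apply/eqP; rewrite -subr_eq0; apply/eqP; apply: Usep => I UI.
have -> : v - d x0 = (v - d (xf I)) - d (x0 - xf I).
  by rewrite (linB hd) opprB addrA subrK.
apply: (subB (Ussub UI)); first by case: (hA I UI).
by apply: hdI => //; apply: hx0.
Qed.

Lemma compl_gen n (Jf' : (V -> Prop) -> V -> Prop) :
  (forall I, U I -> subspace (Jf' I)) ->
  (forall I z, U I -> I z -> pi n z = z -> d z = 0 -> Jf' I z) ->
  (forall I1 I2, U I1 -> U I2 -> subset_of I1 I2 -> subset_of (Jf' I1) (Jf' I2)) ->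
  forall x : (V -> Prop) -> V, (forall I, U I -> pi n (x I) = x I /\ d (x I) = 0) ->
   (forall I1 I2, U I1 -> U I2 -> subset_of I1 I2 -> Jf' I2 (x I1 - x I2)) ->
   exists y0, pi n y0 = y0 /\ d y0 = 0 /\ forall I, U I -> Jf' I (y0 - x I).
Proof.
move=> hJs hJI hJm x hx hc.
pose W := fun y => pi n y = y /\ d y = 0.
have hW : subspace W.
  split; first by split; [exact: (lin0 (pil hg _))|exact: (lin0 hd)].
  move=> a u v [pu du] [pv dv]; split; first by rewrite (pil hg) pu pv.
  by rewrite hd du dv scaler0 addr0.
pose A I y := W y /\ Jf' I (y - x I).
have [yf [hA hyc]] : exists y : (V -> Prop) -> V, (forall I, U I -> A I (y I)) /\
     (forall I1 I2, U I1 -> U I2 -> subset_of I1 I2 -> I2 (y I1 - y I2)).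
  apply: (@ml k V W U hW Udir Ussub).
  - move=> I UI; exact: span_fincodim hW (Ussub UI) (Ufin UI).
  - move=> I UI; have hJ := hJs I UI; split; last split; last split.
    + exists (x I); split; first exact: hx.
      by rewrite subrr; exact: sub0.
    + by move=> y [].
    + move=> y1 y2 y3 a [W1 J1] [W2 J2] [W3 J3]; split.
        exact: (sub_aff hW).
      exact: combP.
    + move=> y i [Wy Jy] [Wi Ii]; split; first by apply: subD.
      rewrite addrAC; apply: subD => //; apply: hJI => //; by case: Wi.
  - move=> I1 I2 U1 U2 s y [Wy Jy]; split => //.
    have -> : y - x I2 = (y - x I1) + (x I1 - x I2) by rewrite addrA subrK.
    apply: (subD (hJs I2 U2)); last exact: hc.
    exact: hJm Jy.
have [y0 [py0 hy0]] := Ucompl (x := yf) (n := n) (fun J UJ => proj1 (proj1 (hA J UJ))) hyc.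
have dy0 : d y0 = 0.
  apply: Usep => I UI.
  have -> : d y0 = d (y0 - yf I) by rewrite (linB hd); have [[_ ->] _] := hA I UI; rewrite subr0.
  by apply: hdI => //; apply: hy0.
exists y0; split => //; split => // I UI.
have -> : y0 - x I = (y0 - yf I) + (yf I - x I) by rewrite addrA subrK.
apply: (subD (hJs I UI)); last by case: (hA I UI).
apply: hJI => //; first exact: hy0.
  by rewrite (linB (pil hg _)) py0; have [[-> _] _] := hA I UI.
by rewrite (linB hd) dy0; have [[_ ->] _] := hA I UI; rewrite subrr.
Qed.
Lemma hom_gsubs : graded_sub pi (cycles d) /\ graded_sub pi (bounds d) /\
   subset_of (bounds d) (cycles d).
Proof.
split; first by split; [exact: cyc_sub|move=> n v; apply: cyc_pi].
split; first by split; [exact: bnd_sub|move=> n v [c ->]; exists (pi (n - 1) c); apply: comm'].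
by move=> v [c ->]; rewrite /cycles hdd.
Qed.

Lemma hom_gr : gr_pc_top pi (cycles d) (bounds d) (hom_top d U).
Proof.
split; first exact: (dir_img (@Jmono)).
split.
  move=> J [I [UI ->]]; split; first exact: Jgr.
  split; first exact: BJ.
  split; first exact: JZ.
  apply: fincodim_mono (span_fincodim cyc_sub (Ussub UI) (Ufin UI)) _.
  by move=> v [Zv Iv]; apply: ZIJ.
split.
  move=> v Zv hJ; apply: (grad_closed hg bnd_sub) => n.
  apply: (@sep_h n); first exact: pipi_id.
    exact: cyc_pi.
  move=> I UI; have [_ h] := Jgr UI; apply: h.
  by apply: hJ; exists I.
move=> n x hx hc.
have H := @compl_gen n Jf (fun I UI => @Jsub I UI) (fun I z _ Iz _ dz => @ZIJ I z Iz dz)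
  (fun I1 I2 _ _ s => @Jmono I1 I2 s) (fun I => x (Jf I)).
have [||y0 [py0 [dy0 hy0]]] := H.
- by move=> I UI; have [h1 h2] := hx (Jf I) (ex_intro _ I (conj UI erefl)); split.
- move=> I1 I2 U1 U2 s; apply: hc; [exists I1|exists I2|apply: Jmono] => //.
exists y0; split => //; split => // J [I [UI ->]]; exact: hy0.
Qed.

Lemma hom0 : subspace (cycles0 pi d) /\ subspace (bounds0 pi d) /\
  subset_of (bounds0 pi d) (cycles0 pi d) /\
  pc_top (cycles0 pi d) (bounds0 pi d) (hom_top0 pi d U).
Proof.
have hZ0 : subspace (cycles0 pi d) := subI (homog_sub hg 0) cyc_sub.
have Jf0s : forall I, U I -> subspace (fun z => pi 0 z = z /\ Jf I z).
  by move=> I UI; apply: subI; [exact: homog_sub|exact: Jsub].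
split => //; split; first exact: subI (homog_sub hg 0) bnd_sub.
split; first by move=> v [p0 [c e]]; split => //; rewrite e /cycles hdd.
split.
  apply: (@dir_img (fun I z => pi 0 z = z /\ Jf I z)).
  by move=> I1 I2 s z [p0 hz]; split => //; apply: Jmono hz.
split.
  move=> J [I [UI ->]]; split; first exact: Jf0s.
  split; first by move=> v [p0 bv]; split => //; apply: BJ.
  split; first by move=> v [p0 hv]; split => //; apply: JZ hv.
  apply: fincodim_mono (span_fincodim hZ0 (Ussub UI) (Ufin UI)) _.
  by move=> v [[p0 dv] Iv]; split => //; apply: ZIJ.
split.
  move=> v [p0 d0] hJ; split => //.
  apply: (sep_h p0 d0) => I UI.
  by have [] := hJ _ (ex_intro _ I (conj UI erefl)).
move=> x hx hc.
have H := @compl_gen 0 (fun I z => pi 0 z = z /\ Jf I z) Jf0s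
  (fun I z _ Iz p0 dz => conj p0 (@ZIJ I z Iz dz))
  (fun I1 I2 _ _ s z h => conj (proj1 h) (@Jmono I1 I2 s z (proj2 h)))
  (fun I => x (fun z => pi 0 z = z /\ Jf I z)).
have [||y0 [py0 [dy0 hy0]]] := H.
- by move=> I UI; apply: hx; exists I.
- move=> I1 I2 U1 U2 s; apply: (hc (fun z => pi 0 z = z /\ Jf I1 z) (fun z => pi 0 z = z /\ Jf I2 z)); [exists I1|exists I2|] => //.
  by move=> z [p0 hz]; split => //; apply: Jmono hz.
exists y0; split => //; move=> J [I [UI ->]]; exact: hy0.
Qed.
End Hom.

Lemma signT (R : pzRingType) n (y : R) : (-1) ^+ n * y = y \/ (-1) ^+ n * y = - y.
Proof.
rewrite -signr_odd; case: (odd n); [right; rewrite expr1 mulN1r| left; rewrite expr0 mul1r] => //.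
Qed.

Lemma signK (k : fieldType) (V : lmodType k) n (y : V) :
  (-1) ^+ n *: y = y \/ (-1) ^+ n *: y = - y.
Proof.
rewrite -signr_odd; case: (odd n); [right; rewrite expr1 scaleN1r| left; rewrite expr0 scale1r] => //.
Qed.

Section Alg.
Variables (k : fieldType) (T : algType k) (pi : int -> T -> T) (d : T -> T).
Hypotheses (hg : is_grading pi) (hd : islin d)
  (hdpi : forall n v, pi (n + 1) (d (pi n v)) = d (pi n v))
  (hleib : forall (p : int) a b, pi p a = a ->
      d (a * b) = d a * b + (-1) ^+ `|p|%N * (a * d b)).


Lemma d1 : pi 0 1 = 1 -> d 1 = 0.
Proof.
move=> h; have := hleib 1 h; rewrite mulr1 /= expr0 !mul1r mulr1.
move=> e; apply/eqP; rewrite -(subrr (d 1)); apply/eqP.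
by rewrite {2}e addrK.
Qed.

Lemma cyc_mul a b : d a = 0 -> d b = 0 -> d (a * b) = 0.
Proof.
move=> da db; have [s ->] := decomp hg a; rewrite mulr_suml.
apply: (sub_sum (cyc_sub hd)) => p _.
by rewrite /cycles (hleib _ (pipi_id hg p a)) (cyc_pi hg hd hdpi p da) db mul0r mulr0 mulr0 addr0.
Qed.

Lemma bnd_r a c : d a = 0 -> bounds d (d c * a).
Proof.
move=> da; have [s ec] := decomp hg c; rewrite ec (lin_sum hd) mulr_suml.
apply: (sub_sum (bnd_sub hd)) => p _.
exists (pi p c * a).
by rewrite (hleib _ (pipi_id hg p c)) da !mulr0 addr0.
Qed.

Lemma bnd_l a c : d a = 0 -> bounds d (a * d c).
Proof.
move=> da; have [s ->] := decomp hg a; rewrite mulr_suml.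
apply: (sub_sum (bnd_sub hd)) => p _.
have e := hleib c (pipi_id hg p a).
rewrite (cyc_pi hg hd hdpi p da) mul0r add0r in e.
case: (signT `|p|%N (pi p a * d c)) => h; rewrite h in e.
  by exists (pi p a * c).
by exists (- (pi p a * c)); rewrite (linN hd) e opprK.
Qed.
End Alg.

Section Mod.
Variables (k : fieldType) (T : algType k) (pi : int -> T -> T) (d : T -> T).
Variables (M : lmodType k) (piM : int -> M -> M) (dM : M -> M) (act : M -> T -> M).
Hypotheses (hgM : is_grading piM) (hdM : islin dM)
  (hdpiM : forall n v, piM (n + 1) (dM (piM n v)) = dM (piM n v))
  (hact1 : forall x, islin (fun m => act m x))
  (hact2 : forall m, islin (act m))
  (hleibM : forall (p : int) m x, piM p m = m ->
      dM (act m x) = act (dM m) x + (-1) ^+ `|p|%N *: act m (d x)).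

Lemma ZM_act m x : dM m = 0 -> d x = 0 -> dM (act m x) = 0.
Proof.
move=> dm dx; have [s ->] := decomp hgM m; rewrite (lin_sum (hact1 x)).
apply: (sub_sum (cyc_sub hdM)) => p _.
rewrite /cycles (hleibM _ (pipi_id hgM p m)) (cyc_pi hgM hdM hdpiM p dm) dx.
by rewrite (lin0 (hact1 x)) (lin0 (hact2 _)) scaler0 addr0.
Qed.

Lemma BM_act m x : bounds dM m -> d x = 0 -> bounds dM (act m x).
Proof.
move=> [c ->] dx; have [s ec] := decomp hgM c; rewrite ec (lin_sum hdM) (lin_sum (hact1 x)).
apply: (sub_sum (bnd_sub hdM)) => p _.
exists (act (piM p c) x).
by rewrite (hleibM _ (pipi_id hgM p c)) dx (lin0 (hact2 _)) scaler0 addr0.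
Qed.

Lemma ZM_BA m x : dM m = 0 -> bounds d x -> bounds dM (act m x).
Proof.
move=> dm [b ->]; have [s ->] := decomp hgM m; rewrite (lin_sum (hact1 _)).
apply: (sub_sum (bnd_sub hdM)) => p _.
have e := hleibM b (pipi_id hgM p m).
rewrite (cyc_pi hgM hdM hdpiM p dm) (lin0 (hact1 b)) add0r in e.
case: (signK `|p|%N (act (piM p m) (d b))) => h; rewrite h in e.
  by exists (act (piM p m) b).
by exists (- (act (piM p m) b)); rewrite (linN hdM) e opprK.
Qed.
End Mod.

Theorem lemma7p7 (k : fieldType) (R : falgType k) (T : algType k)
    (pi : int -> T -> T) (d : T -> T) (phi : R -> T) (U : (T -> Prop) -> Prop) :
  separable_alg R ->
  dg_R_alg pi d phi ->
  bpc_dg_alg pi d U ->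
  (bpc_graded_alg_q pi (cycles d) (bounds d) (hom_top d U) /\
   pc_alg_q (cycles0 pi d) (bounds0 pi d) (hom_top0 pi d U)) /\
  (forall (M : lmodType k) (piM : int -> M -> M) (dM : M -> M) (act : M -> T -> M)
          (N : (M -> Prop) -> Prop),
     dg_module pi d piM dM act ->
     pc_dg_module piM dM act N ->
     pc_gr_module_q piM act (cycles d) (bounds d) (cycles dM) (bounds dM) (hom_top dM N)).
Proof.
move=> _ hdg hbpc.
case: hdg => [[hg [h01 hgm]] [_ [_ [_ [_ [hd [hdpi [hdd [hleib _]]]]]]]]].
case: hbpc => [htop hUI].
have hdI : forall I, U I -> forall v, I v -> I (d v) by move=> I UI; case: (hUI I UI).
have hId : forall I, U I -> two_sided_ideal_in (fun _ => True) I by move=> I UI; case: (hUI I UI).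
have [gZ [gB BZ]] := hom_gsubs hg hd hdpi hdd.
have hgr := hom_gr hg hd hdpi hdd htop hdI.
have [sZ0 [sB0 [B0Z0 pc0]]] := hom0 hg hd hdpi hdd htop hdI.
have d1' := d1 hleib h01.
have Z0mul : forall a b, pi 0 a = a -> pi 0 b = b -> pi 0 (a * b) = a * b.
  by move=> a b pa pb; have := hgm 0 0 a b pa pb; rewrite addr0.
split; first split.
- split; first exact: (conj hg (conj h01 hgm)).
  split => //; split => //; split; first by move=> a b; apply: (cyc_mul hg hd hdpi hleib).
  split => //; split => //; split.
    move=> a b Za [c ->]; split; [exact: (bnd_l hg hd hdpi hleib c Za)|exact: (bnd_r hg hd hleib c Za)].
  split => //.
  move=> J [I [UI ->]] a b Za [i [c [Ii [di ->]]]].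
  have [c1 e1] := bnd_l hg hd hdpi hleib c Za.
  have [c2 e2] := bnd_r hg hd hleib c Za.
  split.
    exists (a * i), c1; split; first by case: (hId I UI a i Logic.I Ii).
    split; first exact: (cyc_mul hg hd hdpi hleib Za di).
    by rewrite mulrDr e1.
  exists (i * a), c2; split; first by case: (hId I UI a i Logic.I Ii).
  split; first exact: (cyc_mul hg hd hdpi hleib di Za).
  by rewrite mulrDl e2.
- split => //; split => //; split.
    move=> a b [pa da] [pb db]; split; first exact: Z0mul.
    exact: (cyc_mul hg hd hdpi hleib da db).
  split => //; split => //; split.
    move=> a b [pa da] [pb [c ec]]; split.
      split; first by apply: Z0mul => //.
      by have := bnd_l hg hd hdpi hleib c da; rewrite -ec.
    split; first by apply: Z0mul => //.
    by have := bnd_r hg hd hleib c da; rewrite -ec.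
  split => //.
  move=> J [I [UI ->]] a b [pa da] [pb [i [c [Ii [di eb]]]]].
  split; first by apply: Z0mul.
  have [c2 e2] := bnd_r hg hd hleib c da.
  exists (i * a), c2; split; first by case: (hId I UI a i Logic.I Ii).
  split; first exact: (cyc_mul hg hd hdpi hleib di da).
  by rewrite eb mulrDl e2.
move=> M piM dM act N hdgm hpcm.
case: hdgm => [hgM [hact1 [hact2 [_ [_ [_ [hdM [hdpiM [hddM hleibM]]]]]]]]].
case: hpcm => [htopM hNI].
have hact1' : forall x, islin (fun m => act m x) by move=> x a u v; apply: hact1.
have hact2' : forall m, islin (act m) by move=> m a u v; apply: hact2.
have hdIM : forall I, N I -> forall v, I v -> I (dM v) by move=> I NI; case: (hNI I NI).
have [gZM [gBM BMZM]] := hom_gsubs hgM hdM hdpiM hddM.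
have hgrM := hom_gr hgM hdM hdpiM hddM htopM hdIM.
split => //; split => //; split => //.
split; first by move=> m x Zm Zx; apply: (ZM_act hgM hdM hdpiM hact1' hact2' hleibM).
split; first by move=> m x Bm Zx; apply: (BM_act hgM hdM hact1' hact2' hleibM).
split; first by move=> m x Zm Bx; apply: (ZM_BA hgM hdM hdpiM hact1' hleibM).
split => //.
move=> J [I [NI ->]] m x [i [c [Ii [di ->]]]] Zx.
have [c2 e2] := BM_act hgM hdM hact1' hact2' hleibM (ex_intro _ c erefl) Zx.
exists (act i x), c2; split; first by case: (hNI I NI) => h _; apply: h.
split; first exact: (ZM_act hgM hdM hdpiM hact1' hact2' hleibM di Zx).
by rewrite (linD (hact1' x)) e2.
Qed.
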